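(* With the notation of the context, for every $v=\sum_{i,j}x_{ij}(i,j)\in V$ we have $$\kappa_A(v)\ \le\ \frac1N\sum_{i\ge j}x_{ij}+\Big(1-\frac1N\Big)\sum_{i<j}x_{ij},$$ and the same inequality holds with $\kappa_B$ in place of $\kappa_A$.
   Context: Let $A,B$ be groups, $L\ge1$, $a_1,\dots,a_L\in A\setminus\{1\}$, $b_1,\dots,b_L\in B\setminus\{1\}$. Let $N\in\{2,3,\dots\}\cup\{\infty\}$ be the minimum of the orders of $a_1,\dots,a_L,b_1,\dots,b_L$ (convention $1/\infty=0$). Let $W$ be the real vector space with basis the formal symbols $(i,j)$, $1\le i,j\le L$. Let $V=\{\sum_{i,j}x_{ij}(i,j): x_{ij}\ge0,\ \sum_i x_{ij}=1 \text{ for all } j,\ \sum_j x_{ij}=1\text{ for all } i\}$. A disk vector in $A$ is an element of $W$ of the form $\sum_{j=1}^k (i_j,i_{j+1})$ with $k\ge1$, indices $i_1,\dots,i_k\in\{1,\dots,L\}$, $i_{k+1}=i_1$, and $a_{i_1}a_{i_2}\cdots a_{i_k}=1$ in $A$; let $\mathcal D_A$ be the set of disk vectors in $A$, and define $\mathcal D_B$ analogously using the $b_i$. For $v\in V$ set $\kappa_A(v)=\sup\{\sum_s t_s : v=\sum_s t_s d_s+\sum_{i,j}x'_{ij}(i,j),\ t_s\ge0,\ d_s\in\mathcal D_A,\ x'_{ij}\ge 0\}$ (finite sums), and define $\kappa_B$ analogously with $\mathcal D_B$. *)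

(* Defs.v *)
From Stdlib Require Import Reals List.
Import ListNotations.
Open Scope R_scope.

Record group := Group {
  gcar :> Type;
  gmul : gcar -> gcar -> gcar;
  gone : gcar;
  ginv : gcar -> gcar;
  gmulA : forall x y z, gmul x (gmul y z) = gmul (gmul x y) z;
  gmul1l : forall x, gmul gone x = x;
  gmulVl : forall x, gmul (ginv x) x = gone
}.

Fixpoint gpow (G : group) (x : G) (n : nat) : G :=
  match n with O => gone G | S m => gmul G x (gpow G x m) end.

Inductive enat := Fin (n : nat) | Inf.

Definition enat_le (o1 o2 : enat) : Prop :=
  match o1, o2 with
  | _, Inf => True
  | Inf, Fin _ => False
  | Fin m, Fin n => (m <= n)%nat
  end.

(* 1/N with the convention 1/∞ = 0. *)
Definition einv (o : enat) : R :=
  match o with Fin n => / INR n | Inf => 0 end.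

Definition has_order (G : group) (x : G) (o : enat) : Prop :=
  match o with
  | Fin n => (0 < n)%nat /\ gpow G x n = gone G /\
             (forall m, (0 < m < n)%nat -> gpow G x m <> gone G)
  | Inf => forall m, (0 < m)%nat -> gpow G x m <> gone G
  end.

Definition sumL (n : nat) (f : nat -> R) : R :=
  fold_right Rplus 0 (map f (seq 0 n)).

(* Indices are 0..L-1 (the paper's 1..L shifted by one).
   A vector of W is a function x : nat -> nat -> R, read on i,j < L. *)
Definition inV (L : nat) (x : nat -> nat -> R) : Prop :=
  (forall i j, (i < L)%nat -> (j < L)%nat -> 0 <= x i j) /\
  (forall j, (j < L)%nat -> sumL L (fun i => x i j) = 1) /\
  (forall i, (i < L)%nat -> sumL L (fun j => x i j) = 1).

(* Cyclic consecutive pairs (i_1,i_2),...,(i_k,i_{k+1}) with i_{k+1}=i_1. *)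
Definition cyc_pairs (l : list nat) : list (nat * nat) :=
  match l with
  | [] => []
  | h :: t => combine l (t ++ [h])
  end.

(* Coefficient of (i,j) in the disk vector sum_j (i_j, i_{j+1}). *)
Definition dcoef (l : list nat) (i j : nat) : R :=
  INR (length (filter (fun p => andb (Nat.eqb (fst p) i) (Nat.eqb (snd p) j))
                      (cyc_pairs l))).

(* The word l = [i_1;...;i_k] gives a disk vector for the letters a. *)
Definition is_disk (G : group) (L : nat) (a : nat -> G) (l : list nat) : Prop :=
  l <> [] /\ (forall i, In i l -> (i < L)%nat) /\
  fold_right (gmul G) (gone G) (map a l) = gone G.

(* [kappa_val G L a x r]: r = sum_s t_s for some decomposition
   x = sum_s t_s d_s + x' with t_s >= 0, d_s disk vectors, x' >= 0.
   kappa(x) is the supremum of such r. *)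
Definition kappa_val (G : group) (L : nat) (a : nat -> G)
    (x : nat -> nat -> R) (r : R) : Prop :=
  exists (ts : list (R * list nat)) (x' : nat -> nat -> R),
    (forall p, In p ts -> 0 <= fst p /\ is_disk G L a (snd p)) /\
    (forall i j, (i < L)%nat -> (j < L)%nat -> 0 <= x' i j) /\
    (forall i j, (i < L)%nat -> (j < L)%nat ->
        x i j = fold_right Rplus 0 (map (fun p => fst p * dcoef (snd p) i j) ts)
                + x' i j) /\
    r = fold_right Rplus 0 (map fst ts).

Definition kbound (L : nat) (N : enat) (x : nat -> nat -> R) : R :=
  einv N * sumL L (fun i => sumL L (fun j => if Nat.leb j i then x i j else 0))
  + (1 - einv N) * sumL L (fun i => sumL L (fun j => if Nat.ltb i j then x i j else 0)).

(* Main.v *)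
Require Import Defs.
From Stdlib Require Import Reals List Lia Lra Classical.
Import ListNotations.
Open Scope R_scope.

Lemma fr_acc (l : list R) a : fold_right Rplus a l = fold_right Rplus 0 l + a.
Proof. induction l; simpl; [ring| rewrite IHl; ring]. Qed.

Lemma sumL_S n f : sumL (S n) f = sumL n f + f n.
Proof. unfold sumL. rewrite seq_S, map_app, fold_right_app. simpl.
  rewrite fr_acc. ring. Qed.

Lemma sumL_ext n f g : (forall i, (i < n)%nat -> f i = g i) -> sumL n f = sumL n g.
Proof. induction n; intros H; [reflexivity|]. rewrite !sumL_S, IHn, H; auto. Qed.

Lemma sumL_zero n : sumL n (fun _ => 0) = 0.
Proof. induction n; [reflexivity|]. rewrite sumL_S, IHn; ring. Qed.

Lemma sumL_plus n f g : sumL n (fun i => f i + g i) = sumL n f + sumL n g.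
Proof. induction n; [simpl; unfold sumL; simpl; ring|]. rewrite !sumL_S, IHn; ring. Qed.

Lemma sumL_scal n r f : sumL n (fun i => r * f i) = r * sumL n f.
Proof. induction n; [unfold sumL; simpl; ring|]. rewrite !sumL_S, IHn; ring. Qed.

Lemma sumL_le n f g : (forall i, (i < n)%nat -> f i <= g i) -> sumL n f <= sumL n g.
Proof. induction n; intros H; [unfold sumL; simpl; lra|]. rewrite !sumL_S.
  assert (f n <= g n) by auto. assert (sumL n f <= sumL n g) by auto. lra. Qed.

Lemma sumL_delta n a g : (a < n)%nat -> sumL n (fun i => if Nat.eqb i a then g i else 0) = g a.
Proof. induction n; intros H; [lia|]. rewrite sumL_S.
  destruct (Nat.eqb_spec n a).
  - subst. rewrite (sumL_ext _ _ (fun _ => 0)), sumL_zero; [ring|].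
    intros i Hi. destruct (Nat.eqb_spec i a); [lia|auto].
  - rewrite IHn by lia. ring.
Qed.

Definition cc (N : enat) (i j : nat) : R := if Nat.leb j i then einv N else 1 - einv N.

Lemma kbound_eq L N x : kbound L N x = sumL L (fun i => sumL L (fun j => cc N i j * x i j)).
Proof. unfold kbound. rewrite <- !sumL_scal, <- sumL_plus. apply sumL_ext; intros i _.
  rewrite <- !sumL_scal, <- sumL_plus. apply sumL_ext; intros j _. unfold cc.
  destruct (Nat.leb_spec j i), (Nat.ltb_spec i j); try lia; ring. Qed.

Definition cnt (ps : list (nat*nat)) i j : R :=
  INR (length (filter (fun p => andb (Nat.eqb (fst p) i) (Nat.eqb (snd p) j)) ps)).

Lemma cnt_sum L (f : nat -> nat -> R) ps :
  (forall p, In p ps -> (fst p < L)%nat /\ (snd p < L)%nat) ->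
  sumL L (fun i => sumL L (fun j => f i j * cnt ps i j)) =
  fold_right Rplus 0 (map (fun p => f (fst p) (snd p)) ps).
Proof.
  induction ps as [|p ps IH]; intros H.
  - simpl. rewrite (sumL_ext _ _ (fun _ => 0)); [apply sumL_zero|]. intros i _.
    rewrite (sumL_ext _ _ (fun _ => 0)); [apply sumL_zero|]. intros j _. unfold cnt; simpl; ring.
  - assert (Hc : forall i j, cnt (p :: ps) i j =
       (if andb (Nat.eqb (fst p) i) (Nat.eqb (snd p) j) then 1 else 0) + cnt ps i j).
    { intros i j. unfold cnt. cbn [filter]. destruct (andb _ _); cbn [length]; [rewrite S_INR|]; ring. }
    simpl. rewrite <- IH by (intros; apply H; simpl; auto).
    rewrite (sumL_ext _ _ (fun i => (if Nat.eqb i (fst p) then f i (snd p) else 0)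
        + sumL L (fun j => f i j * cnt ps i j))).
    + rewrite (sumL_plus L (fun i => if Nat.eqb i (fst p) then f i (snd p) else 0) (fun i => sumL L (fun j => f i j * cnt ps i j))), sumL_delta; [ring|]. apply H; simpl; auto.
    + intros i _. cbv beta. destruct (Nat.eqb_spec i (fst p)).
      * subst i.
        rewrite <- (sumL_delta L (snd p) (fun j => f (fst p) j)) by (apply H; simpl; auto).
        rewrite <- sumL_plus. apply sumL_ext; intros j _. rewrite Hc, Nat.eqb_refl. simpl.
        destruct (Nat.eqb_spec (snd p) j), (Nat.eqb_spec j (snd p)); try lia; subst; ring.
      * try rewrite (proj2 (Nat.eqb_neq _ _) n); rewrite ?Rplus_0_l. apply sumL_ext; intros j _. rewrite Hc.
        destruct (Nat.eqb_spec (fst p) i); [lia|]. simpl. ring.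
Qed.

Lemma chain_lt t : forall x y,
  (forall p, In p (combine (x::t) (t++[y])) -> (fst p < snd p)%nat) -> (x < y)%nat.
Proof. induction t as [|z t IH]; intros x y H.
  - apply (H (x,y)). simpl; auto.
  - assert (x < z)%nat by (apply (H (x,z)); simpl; auto).
    assert (z < y)%nat by (apply IH; intros p Hp; apply H; simpl; auto). lia.
Qed.

Lemma chain_ge t : forall x y,
  (forall p, In p (combine (x::t) (t++[y])) -> (snd p <= fst p)%nat) ->
  (y <= x)%nat /\ forall z, In z t -> (y <= z <= x)%nat.
Proof. induction t as [|z t IH]; intros x y H.
  - split; [apply (H (x,y)); simpl; auto | intros z []].
  - assert (z <= x)%nat by (apply (H (x,z)); simpl; auto).
    destruct (IH z y) as [H1 H2]; [intros p Hp; apply H; simpl; auto|].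
    split; [lia|]. intros w [<-|Hw]; [lia|]. specialize (H2 w Hw); lia.
Qed.

Lemma prod_const (G : group) (a : nat -> G) h t : (forall z, In z t -> z = h) ->
  fold_right (gmul G) (gone G) (map a t) = gpow G (a h) (length t).
Proof. induction t as [|z t IH]; intros H; [reflexivity|]. simpl.
  rewrite (H z) by (simpl; auto). rewrite IH; auto. intros w Hw; apply H; simpl; auto. Qed.

Lemma order_exists (G : group) (g : G) K : forall k, (k <= K)%nat -> (0 < k)%nat ->
  gpow G g k = gone G -> exists m, (m <= k)%nat /\ has_order G g (Fin m).
Proof. induction K; intros k Hk Hk0 Hg; [lia|].
  destruct (classic (exists m, (0 < m < k)%nat /\ gpow G g m = gone G)) as [[m [Hm Hgm]]|Hn].
  - destruct (IHK m) as [m' [? ?]]; try lia; auto. exists m'; split; auto; lia.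
  - exists k; split; [lia|]. simpl. repeat split; auto. intros m Hm Hgm; apply Hn; eauto.
Qed.

Lemma sum_ge_elem {T} (f : T -> R) ps p : (forall q, In q ps -> 0 <= f q) -> In p ps ->
  f p <= fold_right Rplus 0 (map f ps).
Proof. induction ps as [|q ps IH]; intros H Hp; [destruct Hp|]. simpl.
  assert (0 <= fold_right Rplus 0 (map f ps)).
  { clear IH Hp. induction ps; simpl; [lra|]. assert (0 <= f a) by (apply H; simpl; auto).
    assert (0 <= fold_right Rplus 0 (map f ps)) by (apply IHps; intros; apply H; simpl in *; tauto). lra. }
  destruct Hp as [<-|Hp]; [lra|]. assert (0 <= f q) by (apply H; simpl; auto).
  assert (f p <= fold_right Rplus 0 (map f ps)) by (apply IH; auto; intros; apply H; simpl; auto). lra.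
Qed.

Lemma sum_split {T} (f g : T -> R) ps : fold_right Rplus 0 (map (fun p => f p + g p) ps) =
  fold_right Rplus 0 (map f ps) + fold_right Rplus 0 (map g ps).
Proof. induction ps; simpl; [ring|rewrite IHps; ring]. Qed.

Lemma sum_const {T} (f : T -> R) k ps : (forall p, In p ps -> f p = k) ->
  fold_right Rplus 0 (map f ps) = INR (length ps) * k.
Proof. induction ps; intros H; cbn [map fold_right length]; [simpl; ring|]. rewrite H by (simpl; auto). rewrite IHps by (intros; apply H; simpl; auto).
  rewrite S_INR; ring. Qed.

Lemma disk_ge1 (G : group) L (a : nat -> G) N l :
  (forall n, N = Fin n -> (0 < n)%nat) ->
  (forall i o, (i < L)%nat -> has_order G (a i) o -> enat_le N o) ->
  is_disk G L a l ->
  1 <= fold_right Rplus 0 (map (fun p => cc N (fst p) (snd p)) (cyc_pairs l)).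
Proof.
  intros HNn Hord [Hne [HL Hprod]].
  assert (He : 0 <= einv N <= 1).
  { destruct N as [n|]; simpl; [|lra]. specialize (HNn n eq_refl). assert (1 <= INR n) by (apply (le_INR 1); lia).
    split; [left; apply Rinv_0_lt_compat; lra|]. rewrite <- Rinv_1. apply Rinv_le_contravar; lra. }
  destruct l as [|h t]; [congruence|]. unfold cyc_pairs.
  set (P := combine (h :: t) (t ++ [h])).
  destruct (classic (exists p, In p P /\ (fst p < snd p)%nat)) as [[p [Hp Hpa]]|Hna].
  - destruct (classic (exists q, In q P /\ (snd q <= fst q)%nat)) as [[q [Hq Hqa]]|Hnq].
    + assert (Hc : forall r, cc N (fst r) (snd r) =
         (if Nat.leb (snd r) (fst r) then einv N else 0) + (if Nat.leb (snd r) (fst r) then 0 else 1 - einv N)).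
      { intros r; unfold cc; destruct (Nat.leb _ _); ring. }
      rewrite (map_ext _ _ Hc), sum_split.
      pose proof (sum_ge_elem (fun r => if Nat.leb (snd r) (fst r) then einv N else 0) P q) as H1.
      pose proof (sum_ge_elem (fun r => if Nat.leb (snd r) (fst r) then 0 else 1 - einv N) P p) as H2.
      simpl in H1, H2.
      destruct (Nat.leb_spec (snd q) (fst q)); [|lia].
      destruct (Nat.leb_spec (snd p) (fst p)); [lia|].
      assert (einv N <= fold_right Rplus 0 (map (fun r => if Nat.leb (snd r) (fst r) then einv N else 0) P)).
      { apply H1; auto. intros r _. destruct (Nat.leb _ _); lra. }
      assert (1 - einv N <= fold_right Rplus 0 (map (fun r => if Nat.leb (snd r) (fst r) then 0 else 1 - einv N) P)).
      { apply H2; auto. intros r _. destruct (Nat.leb _ _); lra. }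
      lra.
    + exfalso. assert (h < h)%nat; [|lia]. apply chain_lt with t. intros r Hr.
      destruct (Nat.lt_ge_cases (fst r) (snd r)); auto. exfalso; apply Hnq; eauto.
  - assert (Hall : forall r, In r P -> (snd r <= fst r)%nat).
    { intros r Hr. destruct (Nat.le_gt_cases (snd r) (fst r)); auto. exfalso; apply Hna; eauto. }
    destruct (chain_ge t h h Hall) as [_ Heq].
    assert (Heq' : forall z, In z (h :: t) -> z = h).
    { intros z [<-|Hz]; auto. specialize (Heq z Hz); lia. }
    rewrite (prod_const G a h (h::t) Heq') in Hprod.
    assert (Hk : (0 < length (h::t))%nat) by (simpl; lia).
    destruct (order_exists G (a h) (length (h::t)) (length (h::t)) (le_n _) Hk Hprod) as [m [Hm Ho]].
    specialize (Hord h (Fin m) (HL h (or_introl eq_refl)) Ho). destruct N as [n|]; [|destruct Hord]. specialize (HNn n eq_refl). simpl in Hord.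
    rewrite (sum_const _ (einv (Fin n))).
    + unfold P. rewrite length_combine, length_app.
      rewrite Nat.min_l by (simpl; rewrite Nat.add_1_r; apply le_n).
      unfold einv. assert (INR n <= INR (length (h::t))) by (apply le_INR; lia).
      assert (0 < INR n) by (apply lt_0_INR; lia).
      apply (Rmult_le_reg_r (INR n)); auto. rewrite Rmult_assoc, Rinv_l by (apply Rgt_not_eq; lra). lra.
    + intros r Hr. unfold cc. specialize (Hall r Hr). destruct (Nat.leb_spec (snd r) (fst r)); [auto|lia].
Qed.

Lemma ts_sum L N (ts : list (R * list nat)) :
  sumL L (fun i => sumL L (fun j => cc N i j *
     fold_right Rplus 0 (map (fun p => fst p * dcoef (snd p) i j) ts))) =
  fold_right Rplus 0 (map (fun p => fst p *
     sumL L (fun i => sumL L (fun j => cc N i j * dcoef (snd p) i j))) ts).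
Proof. induction ts as [|p ts IH].
  - simpl. rewrite (sumL_ext _ _ (fun _ => 0)); [apply sumL_zero|]. intros i _.
    rewrite (sumL_ext _ _ (fun _ => 0)); [apply sumL_zero|]. intros j _. ring.
  - simpl. rewrite <- IH, <- !sumL_scal, <- sumL_plus. apply sumL_ext; intros i _.
    rewrite <- !sumL_scal, <- sumL_plus. apply sumL_ext; intros j _. ring.
Qed.

Lemma gen (G : group) L (a : nat -> G) N (hN : forall n, N = Fin n -> (0 < n)%nat)
  (hord : forall i o, (i < L)%nat -> has_order G (a i) o -> enat_le N o) x r :
  kappa_val G L a x r -> r <= kbound L N x.
Proof.
  intros [ts [x' [Hts [Hx' [Hx Hr]]]]]. subst r.
  assert (He : 0 <= einv N <= 1).
  { destruct N as [n|]; simpl; [|lra]. specialize (hN n eq_refl).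
    assert (1 <= INR n) by (apply (le_INR 1); lia).
    split; [left; apply Rinv_0_lt_compat; lra|]. rewrite <- Rinv_1. apply Rinv_le_contravar; lra. }
  assert (Hc : forall i j, 0 <= cc N i j) by (intros; unfold cc; destruct (Nat.leb _ _); lra).
  rewrite kbound_eq.
  rewrite (sumL_ext _ _ (fun i => sumL L (fun j => cc N i j *
     fold_right Rplus 0 (map (fun p => fst p * dcoef (snd p) i j) ts)) +
     sumL L (fun j => cc N i j * x' i j))).
  2:{ intros i Hi. rewrite <- sumL_plus. apply sumL_ext; intros j Hj. rewrite Hx by auto. ring. }
  rewrite sumL_plus, ts_sum.
  assert (0 <= sumL L (fun i => sumL L (fun j => cc N i j * x' i j))).
  { rewrite <- (sumL_zero L). apply sumL_le; intros i Hi. rewrite <- (sumL_zero L).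
    apply sumL_le; intros j Hj. apply Rmult_le_pos; auto. }
  assert (fold_right Rplus 0 (map fst ts) <= fold_right Rplus 0 (map (fun p => fst p *
     sumL L (fun i => sumL L (fun j => cc N i j * dcoef (snd p) i j))) ts)); [|lra].
  clear Hx. induction ts as [|p ts IH]; simpl; [lra|].
  destruct (Hts p (or_introl eq_refl)) as [Hp Hd].
  assert (1 <= sumL L (fun i => sumL L (fun j => cc N i j * dcoef (snd p) i j))).
  { change (1 <= sumL L (fun i => sumL L (fun j => cc N i j * cnt (cyc_pairs (snd p)) i j))).
    rewrite (cnt_sum L (cc N)). eapply disk_ge1; eauto.
    intros q Hq. destruct Hd as [Hne [HL _]]. destruct (snd p) as [|h t]; [contradiction|].
    unfold cyc_pairs in Hq. destruct q as [u v]. simpl.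
    split; apply HL; [eapply in_combine_l; eauto|].
    apply in_combine_r in Hq. apply in_app_or in Hq. simpl. destruct Hq as [?|[?|[]]]; auto. }
  assert (fold_right Rplus 0 (map fst ts) <= fold_right Rplus 0 (map (fun p => fst p *
     sumL L (fun i => sumL L (fun j => cc N i j * dcoef (snd p) i j))) ts)).
  { apply IH. intros; apply Hts; simpl; auto. }
  nra.
Qed.

Theorem mainTheorem5 (A B : group) (L : nat) (a : nat -> A) (b : nat -> B)
  (N : enat)
  (hL : (1 <= L)%nat)
  (ha : forall i, (i < L)%nat -> a i <> gone A)
  (hb : forall i, (i < L)%nat -> b i <> gone B)
  (hNmin : (exists i, (i < L)%nat /\ (has_order A (a i) N \/ has_order B (b i) N)) /\
           (forall i o, (i < L)%nat -> has_order A (a i) o -> enat_le N o) /\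
           (forall i o, (i < L)%nat -> has_order B (b i) o -> enat_le N o))
  (x : nat -> nat -> R) (hx : inV L x) :
  (forall r, kappa_val A L a x r -> r <= kbound L N x) /\
  (forall r, kappa_val B L b x r -> r <= kbound L N x).
Proof.
  destruct hNmin as [[i [Hi Ho]] [HA HB]].
  assert (hN : forall n, N = Fin n -> (0 < n)%nat).
  { intros n ->. destruct Ho as [[? _]|[? _]]; auto. }
  split; intros r; apply gen; auto.
Qed.
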